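(* Let $A/B\ne 1/0$ be a convergent of $\theta$, and let $[c_0;c_1,\dots,c_m]$ be any finite continued fraction expansion of the rational number $A/B$ (with $c_0\ge1$ and $c_i\ge1$). Then $\lambda(|A-B\theta|)=c_0+c_1+\cdots+c_m$. Also $\lambda(|1-0\cdot\theta|)=0$.
   Context: Fix an irrational $\theta$ with $1<\theta<2$. Let $S(\theta)=\{i+j\theta : i,j\in\mathbb{N}_0\}$ and let $s_0<s_1<s_2<\cdots$ be its elements in increasing order. Put $\delta(n)=s_{n+1}-s_n$. Let $\lambda$ be the map from the set of values $\{\delta(n):n\ge0\}$ to $\mathbb{N}_0$ that numbers the distinct values in order of first occurrence: $\lambda(\delta(0))=0$, and the $m$-th distinct value to appear in the sequence $\delta(0),\delta(1),\dots$ (counting from $m=0$) receives label $m$. Write $\theta=[t_0;t_1,t_2,\dots]$ (so $t_0=1$) and define $a_{-2}=0,b_{-2}=1,a_{-1}=1,b_{-1}=0$, $a_k=t_ka_{k-1}+a_{k-2}$, $b_k=t_kb_{k-1}+b_{k-2}$ for $k\ge0$. The convergents of $\theta$ are the fraction $1/0$ together with all fractions $\frac{t a_k+a_{k-1}}{t b_k+b_{k-1}}$ with $k\ge -1$ and $1\le t\le t_{k+1}$. For every convergent $A/B$, the number $|A-B\theta|$ is one of the values $\delta(n)$. *)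

(* Defs.v *)
From Stdlib Require Import Reals Lra Lia ZArith Arith List.
Open Scope R_scope.

Definition irrational (x : R) : Prop :=
  ~ exists p q : Z, q <> 0%Z /\ x = IZR p / IZR q.

Definition inS (theta x : R) : Prop :=
  exists i j : nat, x = INR i + INR j * theta.

Definition is_increasing_enum (theta : R) (s : nat -> R) : Prop :=
  (forall n, s n < s (S n)) /\ (forall x, inS theta x <-> exists n, s n = x).

Definition delta (s : nat -> R) (n : nat) : R := s (S n) - s n.

Definition first_occb (d : nat -> R) (j : nat) : bool :=
  forallb (fun j' => if Req_dec_T (d j') (d j) then false else true) (seq 0 j).

Definition n_distinct_before (d : nat -> R) (k : nat) : nat :=
  length (filter (first_occb d) (seq 0 k)).

(* lam d v m : the value v occurs in the sequence d and its label
   (numbering distinct values by order of first occurrence, from 0) is m. *)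
Definition lam (d : nat -> R) (v : R) (m : nat) : Prop :=
  exists k, d k = v /\ (forall k', (k' < k)%nat -> d k' <> v) /\
            m = n_distinct_before d k.

Definition rfloor (x : R) : Z := (up x - 1)%Z.

Fixpoint cf_rem (theta : R) (k : nat) : R :=
  match k with
  | O => theta
  | S k' => / (cf_rem theta k' - IZR (rfloor (cf_rem theta k')))
  end.

Definition cf_t (theta : R) (k : nat) : nat := Z.to_nat (rfloor (cf_rem theta k)).

(* Shifted indexing: pa theta n = a_{n-2}, pb theta n = b_{n-2}. *)
Fixpoint pab (theta : R) (n : nat) : nat * nat :=
  match n with
  | O => (0%nat, 1%nat)
  | S O => (1%nat, 0%nat)
  | S ((S n'') as n') =>
      let (a1, b1) := pab theta n' in
      let (a0, b0) := pab theta n'' in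
      (cf_t theta n'' * a1 + a0, cf_t theta n'' * b1 + b0)%nat
  end.
Definition pa (theta : R) (n : nat) : nat := fst (pab theta n).
Definition pb (theta : R) (n : nat) : nat := snd (pab theta n).

Fixpoint cf_val (c0 : nat) (cs : list nat) : R :=
  match cs with
  | nil => INR c0
  | c1 :: cs' => INR c0 + / cf_val c1 cs'
  end.

(* Main.v *)
Require Import Defs.
From Stdlib Require Import Reals Lra Lia Psatz ZArith Arith List.
From Stdlib Require Import IndefiniteDescription.
Open Scope R_scope.

Fixpoint Ef (n p q : nat) : nat :=
  match n with
  | O => O
  | S n' => if Nat.eqb p q then 1%nat
            else if Nat.ltb p q then S (Ef n' p (q - p)) else S (Ef n' (p - q) q)
  end.
Definition Eu (p q : nat) : nat := Ef (p + q) p q.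

Lemma Ef_sym : forall n p q, Ef n p q = Ef n q p.
Proof.
  induction n; intros p q; simpl; auto.
  destruct (Nat.eqb_spec p q); destruct (Nat.eqb_spec q p); try lia; auto.
  destruct (Nat.ltb_spec p q); destruct (Nat.ltb_spec q p); try lia; f_equal; apply IHn.
Qed.

Lemma Ef_fuel : forall n m p q, (1 <= p)%nat -> (1 <= q)%nat -> (p + q <= n)%nat -> (p + q <= m)%nat ->
  Ef n p q = Ef m p q.
Proof.
  induction n; intros m p q Hp Hq Hn Hm; [lia|].
  destruct m; [lia|]. simpl.
  destruct (Nat.eqb_spec p q); auto.
  destruct (Nat.ltb_spec p q); f_equal; apply IHn; lia.
Qed.

Lemma Eu_sym : forall p q, Eu p q = Eu q p.
Proof. intros; unfold Eu; rewrite Ef_sym; f_equal; lia. Qed.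

Lemma Eu_diag : forall q, (1 <= q)%nat -> Eu q q = 1%nat.
Proof. intros q H. unfold Eu. destruct (q+q)%nat eqn:E; [lia|]. simpl. rewrite Nat.eqb_refl. auto. Qed.

Lemma Eu_add : forall p q, (1 <= p)%nat -> (1 <= q)%nat -> Eu (p + q) q = S (Eu p q).
Proof.
  intros p q Hp Hq. unfold Eu. replace (p + q + q)%nat with (S (p + q + q - 1)) by lia.
  simpl. destruct (Nat.eqb_spec (p+q) q); [lia|]. destruct (Nat.ltb_spec (p+q) q); [lia|].
  f_equal. replace (p + q - q)%nat with p by lia. apply Ef_fuel; lia.
Qed.

Lemma Eu_addmul : forall c r q, (1 <= r)%nat -> (1 <= q)%nat -> Eu (c * q + r) q = (c + Eu r q)%nat.
Proof.
  induction c; intros r q Hr Hq; simpl; auto.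
  replace (q + c * q + r)%nat with ((c * q + r) + q)%nat by lia.
  rewrite Eu_add by lia. rewrite IHc; auto.
Qed.

Lemma cf_val_pos : forall cs c0, (1 <= c0)%nat -> Forall (fun c => (1 <= c)%nat) cs -> 1 <= cf_val c0 cs.
Proof.
  induction cs; intros c0 H0 HF; simpl.
  - apply (le_INR 1). auto.
  - inversion HF as [|x l Ha Hl]; subst. specialize (IHcs a Ha Hl).
    assert (1 <= INR c0) by (apply (le_INR 1); auto).
    assert (0 < / cf_val a cs) by (apply Rinv_0_lt_compat; lra). lra.
Qed.

Lemma E_cf : forall cs c0 p q, (1 <= c0)%nat -> Forall (fun c => (1 <= c)%nat) cs ->
  (1 <= p)%nat -> (1 <= q)%nat -> cf_val c0 cs = INR p / INR q -> Eu p q = (c0 + list_sum cs)%nat.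
Proof.
  induction cs; intros c0 p q H0 HF Hp Hq Hv; simpl in *.
  - assert (INR p = INR (c0 * q)).
    { rewrite mult_INR. assert (0 < INR q) by (apply (lt_INR 0); lia).
      rewrite Hv. field. lra. }
    apply INR_eq in H. subst p. replace (c0 * q)%nat with ((c0 - 1) * q + q)%nat by nia.
    rewrite Eu_addmul by lia. rewrite Eu_diag by lia. lia.
  - inversion HF as [|x l H1 H2]; subst.
    assert (Hv1 := cf_val_pos cs a H1 H2).
    assert (Hq' : 0 < INR q) by (apply (lt_INR 0); lia).
    set (v := cf_val a cs) in *.
    assert (HP : INR p = INR c0 * INR q + INR q / v).
    { assert (INR p = (INR c0 + / v) * INR q). rewrite Hv. field. lra. rewrite H. field. lra. }
    assert (Hlo : INR (c0 * q) < INR p).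
    { rewrite mult_INR. assert (0 < INR q / v) by (apply Rdiv_lt_0_compat; lra). lra. }
    assert (Hhi : INR p <= INR (c0 * q + q)).
    { rewrite plus_INR, mult_INR. assert (INR q / v <= INR q).
      { unfold Rdiv. rewrite <- (Rmult_1_r (INR q)) at 2. apply Rmult_le_compat_l. lra.
        rewrite <- Rinv_1. apply Rinv_le_contravar; lra. } lra. }
    apply INR_lt in Hlo. apply INR_le in Hhi.
    set (r := (p - c0 * q)%nat).
    assert (Hp' : p = (c0 * q + r)%nat) by (unfold r; lia).
    rewrite Hp'. rewrite Eu_addmul by (unfold r; lia). rewrite Eu_sym.
    assert (Hr : INR r = INR q / v) by (rewrite Hp' in HP; rewrite plus_INR, mult_INR in HP; lra).
    assert (Hr0 : 0 < INR r) by (rewrite Hr; apply Rdiv_lt_0_compat; lra).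
    assert (Hr1 : (1 <= r)%nat) by (apply INR_lt; simpl; exact Hr0).
    assert (Hcf : cf_val a cs = INR q / INR r) by (fold v; rewrite Hr; field; lra).
    rewrite (IHcs a q r H1 H2 Hq Hr1 Hcf).
    lia.
Qed.

Lemma pab_SS : forall th n, pa th (S (S n)) = (cf_t th n * pa th (S n) + pa th n)%nat /\
                            pb th (S (S n)) = (cf_t th n * pb th (S n) + pb th n)%nat.
Proof.
  intros th n. unfold pa, pb. change (pab th (S (S n))) with
    (let (a1, b1) := pab th (S n) in let (a0, b0) := pab th n in
      (cf_t th n * a1 + a0, cf_t th n * b1 + b0)%nat).
  destruct (pab th (S n)), (pab th n). simpl. auto.
Qed.

Lemma pb_pos : forall th j, (1 <= pb th (S j) + pb th j)%nat.
Proof.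
  intros th j. induction j. { simpl. unfold pb. simpl. lia. }
  destruct (pab_SS th j) as [_ H]. rewrite H. lia.
Qed.

Fixpoint cfR (l : list nat) (y : R) : R :=
  match l with nil => y | c :: l' => INR c + / cfR l' y end.

Lemma cfR_app : forall l c y, cfR (l ++ c :: nil) y = cfR l (INR c + / y).
Proof. induction l; intros; simpl; auto. rewrite IHl; auto. Qed.

Definition tl th j := map (cf_t th) (seq 0 j).
Definition Tj th j := list_sum (tl th j).

Lemma tl_S : forall th j, tl th (S j) = tl th j ++ cf_t th j :: nil.
Proof. intros. unfold tl. rewrite seq_S, map_app. auto. Qed.

Lemma Tj_S : forall th j, Tj th (S j) = (Tj th j + cf_t th j)%nat.
Proof. intros. unfold Tj. rewrite tl_S, list_sum_app. simpl. lia. Qed.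

Lemma cfR_pab : forall th j y, 0 < y ->
  cfR (tl th j) y = (y * INR (pa th (S j)) + INR (pa th j)) / (y * INR (pb th (S j)) + INR (pb th j)).
Proof.
  intros th j. induction j; intros y Hy.
  - simpl. unfold pa, pb; simpl. rewrite Rmult_1_r, Rmult_0_r, Rplus_0_l, Rplus_0_r. unfold Rdiv. rewrite Rinv_1, Rmult_1_r. reflexivity.
  - rewrite tl_S, cfR_app. 
    assert (Hy' : 0 < INR (cf_t th j) + / y) by (assert (0 < / y) by (apply Rinv_0_lt_compat; lra); pose proof (pos_INR (cf_t th j)); lra).
    rewrite IHj by exact Hy'.
    destruct (pab_SS th j) as [Ha Hb]. rewrite Ha, Hb. rewrite !plus_INR, !mult_INR.
    pose proof (pb_pos th j) as HP.
    set (t := INR (cf_t th j)). assert (0 <= t) by apply pos_INR.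
    set (a1 := INR (pa th (S j))). set (a0 := INR (pa th j)).
    set (b1 := INR (pb th (S j))). set (b0 := INR (pb th j)).
    assert (0 <= b1) by apply pos_INR. assert (0 <= b0) by apply pos_INR.
    assert (1 <= b1 + b0) by (unfold b1, b0; rewrite <- plus_INR; apply (le_INR 1); lia).
    assert (0 < / y) by (apply Rinv_0_lt_compat; lra).
    assert (D1 : 0 < (t + / y) * b1 + b0).
    { destruct (Rle_lt_dec 1 b0). nra. assert (b1 > 0) by lra. nra. }
    assert (D2 : 0 < y * (t * b1 + b0) + b1).
    { assert (0 <= t * b1) by nra. assert (0 <= y * (t * b1 + b0)) by nra. destruct (Rle_lt_dec 1 b1). nra. assert (b0 > 0) by lra. nra. }
    field. split; lra.
Qed.

Lemma cf_val_app : forall cs c0 t, cf_val c0 (cs ++ t :: nil) = cfR (c0 :: cs) (INR t).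
Proof.
  induction cs; intros; simpl; auto. rewrite IHcs. auto.
Qed.

Lemma conv_expansion : forall th j t, (1 <= t)%nat -> (forall k, (1 <= cf_t th k)%nat) ->
  exists c0 cs, (1 <= c0)%nat /\ Forall (fun c => (1 <= c)%nat) cs /\
    cf_val c0 cs = cfR (tl th j) (INR t) /\ (c0 + list_sum cs = Tj th j + t)%nat.
Proof.
  intros th j t Ht Hk. destruct j.
  - exists t, nil. simpl. unfold Tj, tl. simpl. repeat split; auto; lia.
  - exists (cf_t th 0), (map (cf_t th) (seq 1 j) ++ t :: nil).
    repeat split.
    + apply Hk.
    + apply Forall_app; split; [|constructor; auto].
      apply Forall_forall. intros x Hx. apply in_map_iff in Hx. destruct Hx as [k [<- _]]. apply Hk.
    + rewrite cf_val_app. unfold tl. simpl. auto.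
    + rewrite list_sum_app. unfold Tj, tl. simpl. lia.
Qed.

Lemma irr_not_int : forall x z, irrational x -> x <> IZR z.
Proof. intros x z Hi E. apply Hi. exists z, 1%Z. split; [lia|]. rewrite E. simpl. field. Qed.

Lemma rfloor_spec : forall x, irrational x -> IZR (rfloor x) < x < IZR (rfloor x) + 1.
Proof.
  intros x Hi. unfold rfloor. destruct (archimed x) as [H1 H2]. rewrite minus_IZR. simpl.
  split; [|lra]. destruct (Req_dec (IZR (up x) - 1) x) as [He|He]; [|lra].
  exfalso. apply (irr_not_int x (up x - 1) Hi). rewrite minus_IZR. simpl. lra.
Qed.

Lemma rem_props : forall th, irrational th -> 1 < th -> forall k,
  irrational (cf_rem th k) /\ 1 < cf_rem th k.
Proof.
  intros th Hi H1 k. induction k; simpl; auto.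
  destruct IHk as [Hik H1k]. set (x := cf_rem th k) in *.
  destruct (rfloor_spec x Hik) as [F1 F2]. set (f := rfloor x) in *.
  split.
  - intros [p [q [Hq E]]].
    assert (Hp : p <> 0%Z).
    { intro. subst. rewrite Rdiv_0_l in E. assert (0 < / (x - IZR f)) by (apply Rinv_0_lt_compat; lra). lra. }
    apply Hik. exists (f * p + q)%Z, p. split; auto.
    assert (IZR p <> 0) by (apply not_0_IZR; auto).
    assert (IZR q <> 0) by (apply not_0_IZR; auto).
    assert (x - IZR f = IZR q / IZR p).
    { rewrite <- (Rinv_inv (x - IZR f)). rewrite E. field. split; auto. }
    rewrite plus_IZR, mult_IZR. field_simplify; auto. 
    replace x with (IZR f + IZR q / IZR p) by lra. field; auto.
  - assert (0 < x - IZR f < 1) by lra.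
    rewrite <- Rinv_1. apply Rinv_lt_contravar; lra.
Qed.

Lemma cft_props : forall th, irrational th -> 1 < th -> forall k,
  INR (cf_t th k) < cf_rem th k < INR (cf_t th k) + 1 /\ (1 <= cf_t th k)%nat /\
  cf_rem th (S k) = / (cf_rem th k - INR (cf_t th k)).
Proof.
  intros th Hi H1 k. destruct (rem_props th Hi H1 k) as [Hik H1k].
  destruct (rfloor_spec _ Hik) as [F1 F2].
  assert (Hf : (1 <= rfloor (cf_rem th k))%Z).
  { assert (0 < IZR (rfloor (cf_rem th k))) by lra. apply lt_IZR in H. lia. }
  assert (E : INR (cf_t th k) = IZR (rfloor (cf_rem th k))).
  { unfold cf_t. rewrite INR_IZR_INZ. f_equal. lia. }
  rewrite E. repeat split; try lra; try (unfold cf_t; lia).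

Qed.

Record SB := mk { sp : nat; sq : nat; sr : nat; ss : nat }.

Definition step (th : R) (x : SB) : SB :=
  if Rlt_dec (INR (sp x + sr x)) (INR (sq x + ss x) * th)
  then mk (sp x + sr x) (sq x + ss x) (sr x) (ss x)
  else mk (sp x) (sq x) (sp x + sr x) (sq x + ss x).

Fixpoint st (th : R) (n : nat) : SB :=
  match n with O => mk 0 1 1 0 | S n' => step th (st th n') end.

Definition MA th n := (sp (st th n) + sr (st th n))%nat.
Definition MB th n := (sq (st th n) + ss (st th n))%nat.
Definition lower th n := INR (MA th n) < INR (MB th n) * th.
Definition laml th (x : SB) := INR (sq x) * th - INR (sp x).
Definition lamu th (x : SB) := INR (sr x) - INR (ss x) * th.

Lemma st_S_lower : forall th n, lower th n ->
  st th (S n) = mk (MA th n) (MB th n) (sr (st th n)) (ss (st th n)).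
Proof. intros. simpl. unfold step. destruct Rlt_dec; [auto|contradiction]. Qed.

Lemma st_S_upper : forall th n, ~ lower th n ->
  st th (S n) = mk (sp (st th n)) (sq (st th n)) (MA th n) (MB th n).
Proof. intros. simpl. unfold step. destruct Rlt_dec; [contradiction|auto]. Qed.

Lemma irr_lin : forall th (x y : Z), irrational th -> IZR x = IZR y * th -> y = 0%Z.
Proof.
  intros th x y Hi E. destruct (Z.eq_dec y 0); auto. exfalso. apply Hi.
  exists x, y. split; auto. rewrite E. field. apply not_0_IZR; auto.
Qed.

Lemma irr_lin_nat : forall th (a b : nat), irrational th -> INR a = INR b * th -> b = 0%nat.
Proof.
  intros th a b Hi E. rewrite !INR_IZR_INZ in E. apply irr_lin in E; auto. lia.
Qed.

Definition good th (x : SB) : Prop :=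
  (sr x * sq x = sp x * ss x + 1)%nat /\ 0 < laml th x /\ 0 < lamu th x /\
  (1 <= sq x)%nat /\ (1 <= sr x)%nat.

Lemma st_good : forall th, irrational th -> 1 < th -> forall n, good th (st th n).
Proof.
  intros th Hi H1 n. induction n.
  - unfold good, laml, lamu; simpl. repeat split; try lia; lra.
  - destruct IHn as (U & Hl & Hu & Hq & Hr).
    destruct (Rlt_dec (INR (MA th n)) (INR (MB th n) * th)) as [L|L].
    + rewrite st_S_lower by exact L. unfold good, laml, lamu in *; unfold MA, MB in *; simpl.
      repeat split; try nia. rewrite !plus_INR in *. lra. lra.
    + rewrite st_S_upper by exact L. unfold good, laml, lamu in *; unfold MA, MB in *; simpl.
      repeat split; try nia. lra. 
      assert (INR (sp (st th n) + sr (st th n)) <> INR (sq (st th n) + ss (st th n)) * th).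
      { intro E. apply irr_lin_nat in E; auto. lia. }
      lra.
Qed.

Lemma st_1 : forall th, 1 < th -> st th 1 = mk 1 1 1 0.
Proof.
  intros th H. simpl. unfold step. simpl. destruct Rlt_dec; auto. exfalso. apply n. simpl. lra.
Qed.

Lemma lower_0 : forall th, 1 < th -> lower th 0.
Proof. intros. unfold lower, MA, MB. simpl. lra. Qed.

Lemma st_2 : forall th, 1 < th < 2 -> st th 2 = mk 1 1 2 1.
Proof.
  intros th H. change (st th 2) with (step th (st th 1)). rewrite st_1 by lra. unfold step. simpl.
  destruct Rlt_dec; auto. exfalso. simpl in r. lra.
Qed.

Lemma st_bounds : forall th, irrational th -> 1 < th < 2 -> forall n,
  laml th (st th (S n)) < 1 /\ lamu th (st th (S n)) <= 1.
Proof.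
  intros th Hi H n. induction n.
  - rewrite st_1 by lra. unfold laml, lamu; simpl. lra.
  - destruct (st_good th Hi ltac:(lra) (S n)) as (_ & Hl & Hu & _).
    destruct IHn as [A1 A2].
    destruct (Rlt_dec (INR (MA th (S n))) (INR (MB th (S n)) * th)) as [L|L].
    + rewrite st_S_lower by exact L. unfold laml, lamu, MA, MB in *; simpl in *.
      rewrite !plus_INR. split; lra.
    + rewrite st_S_upper by exact L. unfold laml, lamu, MA, MB in *; simpl in *.
      rewrite !plus_INR. split; lra.
Qed.

Lemma st_tags : forall th, 1 < th -> forall n,
  (exists a, (a <= n)%nat /\ lower th a /\ MA th a = sp (st th (S n)) /\ MB th a = sq (st th (S n))) /\
  ((sr (st th (S n)) = 1%nat /\ ss (st th (S n)) = 0%nat) \/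
   exists b, (b <= n)%nat /\ ~ lower th b /\ MA th b = sr (st th (S n)) /\ MB th b = ss (st th (S n))).
Proof.
  intros th H n. induction n.
  - rewrite st_1 by lra. split.
    + exists 0%nat. repeat split; auto. apply lower_0; auto.
    + left; auto.
  - destruct IHn as [[a (Ha1 & Ha2 & Ha3 & Ha4)] HU].
    destruct (Rlt_dec (INR (MA th (S n))) (INR (MB th (S n)) * th)) as [L|L].
    + rewrite st_S_lower by exact L. simpl. split.
      * exists (S n). repeat split; auto.
      * destruct HU as [HU|[b (Hb1 & Hb2 & Hb3 & Hb4)]]; [left; auto|right; exists b; repeat split; auto].
    + rewrite st_S_upper by exact L. simpl. split.
      * exists a. repeat split; auto.
      * right. exists (S n). repeat split; auto.
Qed.

Lemma st_growth : forall th, irrational th -> 1 < th < 2 -> forall n,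
  (1 <= sp (st th (S (S n))))%nat /\ (1 <= sq (st th (S (S n))))%nat /\
  (1 <= sr (st th (S (S n))))%nat /\ (1 <= ss (st th (S (S n))))%nat /\
  (n <= MA th (S (S n)))%nat /\ (n <= MB th (S (S n)))%nat.
Proof.
  intros th Hi H n. induction n.
  - unfold MA, MB. rewrite (st_2 th H). simpl. repeat split; auto with arith.
  - unfold MA, MB in *.
    destruct (Rlt_dec (INR (MA th (S (S n)))) (INR (MB th (S (S n))) * th)) as [L|L].
    + rewrite (st_S_lower th (S (S n))) by exact L. unfold MA, MB in *. cbn [sp sq sr ss]. lia.
    + rewrite (st_S_upper th (S (S n))) by exact L. unfold MA, MB in *. cbn [sp sq sr ss]. lia.
Qed.

Definition covers th n (i j : nat) :=
  (i < MA th (S n))%nat /\ (j < MB th (S n))%nat /\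
  ((sp (st th (S n)) <= i)%nat \/ (ss (st th (S n)) <= j)%nat).

Lemma cover_N : forall th, 1 < th -> forall N i j, (i < MA th (S N))%nat -> (j < MB th (S N))%nat ->
  exists n, covers th n i j.
Proof.
  intros th H N. induction N; intros i j Hi Hj.
  - exists 0%nat. unfold covers. rewrite st_1 by lra. simpl. repeat split; auto; lia.
  - destruct (Nat.lt_ge_cases i (MA th (S N))); destruct (Nat.lt_ge_cases j (MB th (S N)));
      try (apply IHN; auto; fail);
      exists (S N); unfold covers; repeat split; auto;
      (destruct (Rlt_dec (INR (MA th (S N))) (INR (MB th (S N)) * th)) as [L|L];
       [rewrite (st_S_lower th (S N)) by exact L | rewrite (st_S_upper th (S N)) by exact L];
       unfold MA, MB in *; cbn [sp sq sr ss]; lia).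
Qed.

Lemma cover_all : forall th, irrational th -> 1 < th < 2 -> forall i j, exists n, covers th n i j.
Proof.
  intros th Hi H i j.
  destruct (st_growth th Hi H (S (i + j))) as (_ & _ & _ & _ & G1 & G2).
  apply (cover_N th ltac:(lra) (S (S (i + j)))); lia.
Qed.


Lemma s_mono : forall th s, is_increasing_enum th s -> forall a b, (a < b)%nat -> s a < s b.
Proof.
  intros th s [Hs _] a b H. induction H. apply Hs. specialize (Hs m). lra.
Qed.

Lemma s_lt_inv : forall th s, is_increasing_enum th s -> forall a b, s a < s b -> (a < b)%nat.
Proof.
  intros th s He a b H. destruct (Nat.lt_ge_cases a b); auto.
  destruct (Nat.eq_dec a b). subst; lra. assert (b < a)%nat by lia.
  pose proof (s_mono th s He b a H1). lra.
Qed.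

Lemma s_le_inv : forall th s, is_increasing_enum th s -> forall a b, s a <= s b -> (a <= b)%nat.
Proof.
  intros th s He a b H. destruct (Nat.le_gt_cases a b); auto.
  pose proof (s_mono th s He b a H0). lra.
Qed.

Lemma s_repr : forall th s, is_increasing_enum th s -> forall n, exists i j, s n = INR i + INR j * th.
Proof.
  intros th s [_ H] n. destruct (H (s n)) as [_ H2]. destruct (H2 (ex_intro _ n eq_refl)) as [i [j E]].
  exists i, j. auto.
Qed.

Lemma repr_uniq : forall th i j i' j', irrational th ->
  INR i + INR j * th = INR i' + INR j' * th -> i = i' /\ j = j'.
Proof.
  intros th i j i' j' Hi E.
  assert (IZR (Z.of_nat i - Z.of_nat i') = IZR (Z.of_nat j' - Z.of_nat j) * th).
  { rewrite !minus_IZR. rewrite <- !INR_IZR_INZ. lra. }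
  apply irr_lin in H; auto. assert (j = j') by lia. subst. split; auto.
  apply INR_eq. lra.
Qed.

Lemma INR_toNat : forall z, (0 <= z)%Z -> INR (Z.to_nat z) = IZR z.
Proof. intros. rewrite INR_IZR_INZ. f_equal. lia. Qed.

Definition feas (i j : nat) (x y : Z) := (- Z.of_nat i <= x)%Z /\ (- Z.of_nat j <= y)%Z.

Lemma delta_char : forall th s, is_increasing_enum th s -> forall n i j x y,
  s n = INR i + INR j * th -> feas i j x y -> 0 < IZR x + IZR y * th ->
  (forall x' y', feas i j x' y' -> 0 < IZR x' + IZR y' * th -> IZR x + IZR y * th <= IZR x' + IZR y' * th) ->
  delta s n = IZR x + IZR y * th.
Proof.
  intros th s He n i j x y Hn [Fx Fy] Hv Hmin. pose proof He as [Hs HS].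
  unfold delta. apply Rle_antisym.
  - destruct (HS (s n + (IZR x + IZR y * th))) as [H1 _].
    destruct H1 as [m Hm].
    { exists (Z.to_nat (Z.of_nat i + x)), (Z.to_nat (Z.of_nat j + y)).
      rewrite !INR_toNat by lia. rewrite Hn, !plus_IZR, <- !INR_IZR_INZ. ring. }
    assert (n < m)%nat by (apply (s_lt_inv th s He); lra).
    destruct (Nat.eq_dec (S n) m). subst; lra.
    assert (s (S n) < s m) by (apply (s_mono th s He); lia). lra.
  - destruct (s_repr th s He (S n)) as [i' [j' E']].
    assert (Hd : s (S n) - s n = IZR (Z.of_nat i' - Z.of_nat i) + IZR (Z.of_nat j' - Z.of_nat j) * th).
    { rewrite E', Hn, !minus_IZR, <- !INR_IZR_INZ. ring. }
    rewrite Hd. apply Hmin. split; lia. rewrite <- Hd. specialize (Hs n). lra.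
Qed.

Lemma SL : forall th (X : SB) i j x y, good th X ->
  (i < sp X + sr X)%nat -> (j < sq X + ss X)%nat -> feas i j x y -> 0 < IZR x + IZR y * th ->
  (laml th X <= IZR x + IZR y * th /\ lamu th X <= IZR x + IZR y * th) \/
  (laml th X <= IZR x + IZR y * th /\ (sp X <= i)%nat) \/
  (lamu th X <= IZR x + IZR y * th /\ (ss X <= j)%nat).
Proof.
  intros th [p q r s] i j x y (U & Hl & Hu & Hq & Hr) Hi Hj [Fx Fy] Hv.
  unfold laml, lamu in *; cbn [sp sq sr ss] in *.
  set (P := Z.of_nat p) in *. set (Q := Z.of_nat q). set (Rr := Z.of_nat r). set (S := Z.of_nat s).
  assert (UZ : (Rr * Q = P * S + 1)%Z) by (unfold Rr, Q, P, S; lia).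
  set (al := (S * x + Rr * y)%Z). set (be := (Q * x + P * y)%Z).
  assert (Ex : x = (- al * P + be * Rr)%Z) by (unfold al, be; nia).
  assert (Ey : y = (al * Q - be * S)%Z) by (unfold al, be; nia).
  assert (Ev : IZR x + IZR y * th = IZR al * (INR q * th - INR p) + IZR be * (INR r - INR s * th)).
  { rewrite Ex at 1. rewrite Ey at 1. rewrite !INR_IZR_INZ. fold P Q Rr S.
    rewrite minus_IZR, !plus_IZR, !mult_IZR, opp_IZR. ring. }
  rewrite Ev in *. clearbody al be.
  assert (HP : (0 <= P)%Z) by (unfold P; lia). assert (HS : (0 <= S)%Z) by (unfold S; lia).
  destruct (Z_lt_le_dec 0 al) as [A1|A1]; destruct (Z_lt_le_dec 0 be) as [B1|B1].
  - left. assert (1 <= IZR al) by (apply IZR_le; lia). assert (1 <= IZR be) by (apply IZR_le; lia).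
    split; nra.
  - destruct (Z.eq_dec be 0).
    + right; left. subst be. assert (1 <= IZR al) by (apply IZR_le; lia). split. simpl; nra.
      unfold P in Ex. nia.
    + exfalso. unfold P, Rr in Ex. nia.
  - destruct (Z.eq_dec al 0).
    + right; right. subst al. assert (1 <= IZR be) by (apply IZR_le; lia). split. simpl; nra.
      unfold S in Ey. nia.
    + exfalso. unfold Q, S in Ey. nia.
  - exfalso. assert (IZR al <= 0) by (apply IZR_le; lia). assert (IZR be <= 0) by (apply IZR_le; lia). nra.
Qed.

Lemma PL_l : forall th s (X : SB) n i j, is_increasing_enum th s -> good th X ->
  s n = INR i + INR j * th -> (sp X <= i)%nat -> (i < sp X + sr X)%nat -> (j < sq X + ss X)%nat ->
  ((j < ss X)%nat \/ laml th X <= lamu th X) -> delta s n = laml th X.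
Proof.
  intros th s X n i j He G Hn H1 H2 H3 H4.
  assert (Ev : IZR (- Z.of_nat (sp X)) + IZR (Z.of_nat (sq X)) * th = laml th X).
  { unfold laml. rewrite opp_IZR, <- !INR_IZR_INZ. ring. }
  rewrite <- Ev. pose proof G as (_ & Hl & Hu & _).
  apply (delta_char th s He n i j); auto.
  - split; lia.
  - lra.
  - intros x' y' Hf Hv. rewrite Ev.
    destruct (SL th X i j x' y' G H2 H3 Hf Hv) as [[A B]|[[A B]|[A B]]]; try lra.
    destruct H4; [lia|lra].
Qed.

Lemma PL_u : forall th s (X : SB) n i j, is_increasing_enum th s -> good th X ->
  s n = INR i + INR j * th -> (ss X <= j)%nat -> (i < sp X + sr X)%nat -> (j < sq X + ss X)%nat ->
  ((i < sp X)%nat \/ lamu th X <= laml th X) -> delta s n = lamu th X.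
Proof.
  intros th s X n i j He G Hn H1 H2 H3 H4.
  assert (Ev : IZR (Z.of_nat (sr X)) + IZR (- Z.of_nat (ss X)) * th = lamu th X).
  { unfold lamu. rewrite opp_IZR, <- !INR_IZR_INZ. ring. }
  rewrite <- Ev. pose proof G as (_ & Hl & Hu & _).
  apply (delta_char th s He n i j); auto.
  - split; lia.
  - lra.
  - intros x' y' Hf Hv. rewrite Ev.
    destruct (SL th X i j x' y' G H2 H3 Hf Hv) as [[A B]|[[A B]|[A B]]]; try lra.
    destruct H4; [lia|lra].
Qed.

Lemma PL : forall th s (X : SB) n i j, is_increasing_enum th s -> good th X ->
  s n = INR i + INR j * th -> (i < sp X + sr X)%nat -> (j < sq X + ss X)%nat ->
  ((sp X <= i)%nat \/ (ss X <= j)%nat) ->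
  (delta s n = laml th X /\ (sp X <= i)%nat) \/ (delta s n = lamu th X /\ (ss X <= j)%nat).
Proof.
  intros th s X n i j He G Hn H2 H3 H4.
  destruct (le_lt_dec (sp X) i) as [P|P].
  - destruct (lt_dec j (ss X)) as [J|J].
    + left. split; auto. apply (PL_l th s X n i j); auto.
    + destruct (Rle_lt_dec (laml th X) (lamu th X)) as [C|C].
      * left. split; auto. apply (PL_l th s X n i j); auto.
      * right. split; [|lia]. apply (PL_u th s X n i j); auto; lia || lra.
  - right. destruct H4 as [H4|H4]; [lia|]. split; auto. apply (PL_u th s X n i j); auto.
Qed.

Definition lamv th n := Rabs (INR (MA th n) - INR (MB th n) * th).
Definition mpos th n := if Rlt_dec (INR (MA th n)) (INR (MB th n) * th) then INR (MA th n) else INR (MB th n) * th.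

Lemma MB_pos : forall th, irrational th -> 1 < th -> forall n, (1 <= MB th n)%nat.
Proof. intros. destruct (st_good th H H0 n) as (_&_&_&Hq&_). unfold MB. lia. Qed.

Lemma Core : forall th s, irrational th -> 1 < th < 2 -> is_increasing_enum th s -> forall k,
  delta s k = 1 \/ exists m, delta s k = lamv th m /\ mpos th m <= s k.
Proof.
  intros th s Hi Ht He k. destruct (s_repr th s He k) as [i [j Hk]].
  destruct (cover_all th Hi Ht i j) as [n (C1 & C2 & C3)].
  unfold MA, MB in C1, C2.
  pose proof (st_good th Hi ltac:(lra) (S n)) as G.
  assert (Hth : 0 <= INR j * th) by (pose proof (pos_INR j); nra).
  destruct (PL th s (st th (S n)) k i j He G Hk C1 C2 C3) as [[D P]|[D P]];
  destruct (st_tags th ltac:(lra) n) as [[a (Ha1 & Ha2 & Ha3 & Ha4)] HU].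
  - right. exists a. split.
    + rewrite D. unfold lamv, laml. rewrite Ha3, Ha4. unfold lower in Ha2. rewrite Ha3, Ha4 in Ha2.
      rewrite Rabs_left by lra. ring.
    + unfold mpos. destruct Rlt_dec; [|contradiction]. rewrite Ha3, Hk. apply le_INR in P. lra.
  - destruct HU as [[E1 E2]|[b (Hb1 & Hb2 & Hb3 & Hb4)]].
    + left. rewrite D. unfold lamu. rewrite E1, E2. simpl. ring.
    + right. exists b. split.
      * rewrite D. unfold lamv, lamu. rewrite Hb3, Hb4. unfold lower in Hb2. rewrite Hb3, Hb4 in Hb2.
        rewrite Rabs_right by lra. ring.
      * unfold mpos. destruct Rlt_dec; [contradiction|]. rewrite Hb4, Hk. apply le_INR in P.
        pose proof (pos_INR i). nra.
Qed.

Lemma pos_in_S : forall th n, inS th (mpos th n).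
Proof.
  intros th n. unfold mpos. destruct Rlt_dec.
  - exists (MA th n), 0%nat. simpl. ring.
  - exists 0%nat, (MB th n). simpl. ring.
Qed.

Lemma delta_at_pos : forall th s, irrational th -> 1 < th < 2 -> is_increasing_enum th s ->
  forall m K, s K = mpos th m -> delta s K = lamv th m.
Proof.
  intros th s Hi Ht He m K HK.
  pose proof (st_good th Hi ltac:(lra) (S m)) as G. pose proof G as (U & Hl & Hu & Hq & Hr).
  destruct (st_bounds th Hi Ht m) as [B1 B2].
  unfold mpos in HK. destruct (Rlt_dec (INR (MA th m)) (INR (MB th m) * th)) as [L|L].
  - pose proof (st_S_lower th m L) as E. rewrite E in *. cbn [sp sq sr ss] in *.
    rewrite (PL_l th s _ K (MA th m) 0 He G); cbn [sp sq sr ss]; try lia.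
    + unfold laml, lamv. cbn [sp sq sr ss]. rewrite Rabs_left by lra. ring.
    + rewrite HK. simpl. ring.
    + destruct (ss (st th m)) eqn:Es; [|left; lia]. right. assert (sr (st th m) = 1%nat) by nia.
      unfold laml, lamu in *. cbn [sp sq sr ss] in *. try rewrite H in *; try rewrite Es in *. simpl in *. lra.
  - pose proof (st_S_upper th m L) as E. rewrite E in *. cbn [sp sq sr ss] in *.
    rewrite (PL_u th s _ K 0 (MB th m) He G); cbn [sp sq sr ss]; try lia.
    + unfold lamu, lamv. cbn [sp sq sr ss]. rewrite Rabs_right by lra. ring.
    + rewrite HK. simpl. ring.
    + destruct (sp (st th m)) eqn:Es; [|left; lia]. right. assert (sq (st th m) = 1%nat) by nia.
      unfold laml, lamu in *. cbn [sp sq sr ss] in *. try rewrite H in *; try rewrite Es in *. simpl in *. lra.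
Qed.

Lemma pos_incr : forall th, irrational th -> 1 < th < 2 -> forall m, mpos th m < mpos th (S m).
Proof.
  intros th Hi Ht m.
  pose proof (st_good th Hi ltac:(lra) (S m)) as G. pose proof G as (U & Hl & Hu & Hq & Hr).
  unfold mpos. unfold MA, MB. fold (MA th m) (MB th m).
  destruct (Rlt_dec (INR (MA th m)) (INR (MB th m) * th)) as [L|L].
  - rewrite (st_S_lower th m L) in *. unfold laml, lamu in *. cbn [sp sq sr ss] in *.
    rewrite !plus_INR. assert (1 <= INR (sr (st th m))) by (apply (le_INR 1); lia).
    pose proof (pos_INR (ss (st th m))).
    repeat match goal with |- context [Rlt_dec ?a ?b] => destruct (Rlt_dec a b) end; try lra; try nra.
  - rewrite (st_S_upper th m L) in *. unfold laml, lamu in *. cbn [sp sq sr ss] in *.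
    rewrite !plus_INR. assert (1 <= INR (sq (st th m))) by (apply (le_INR 1); lia).
    pose proof (pos_INR (sp (st th m))).
    repeat match goal with |- context [Rlt_dec ?a ?b] => destruct (Rlt_dec a b) end; try lra; try nra.
Qed.

Lemma pos_incr_lt : forall th, irrational th -> 1 < th < 2 -> forall a b, (a < b)%nat -> mpos th a < mpos th b.
Proof.
  intros th Hi Ht a b H. induction H. apply pos_incr; auto.
  pose proof (pos_incr th Hi Ht m). lra.
Qed.

Lemma lamv_inj : forall th, irrational th -> 1 < th < 2 -> forall a b, lamv th a = lamv th b -> a = b.
Proof.
  assert (Main : forall th, irrational th -> 1 < th < 2 -> forall a b, (a < b)%nat -> lamv th a = lamv th b -> False).
  { intros th Hi Ht a b Hab E. pose proof (pos_incr_lt th Hi Ht a b Hab) as P.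
    pose proof (MB_pos th Hi ltac:(lra) a). pose proof (MB_pos th Hi ltac:(lra) b).
    unfold lamv in E. unfold Rabs in E. destruct Rcase_abs; destruct Rcase_abs.
    - assert (INR (MA th a) + INR (MB th b) * th = INR (MA th b) + INR (MB th a) * th) by lra.
      apply repr_uniq in H1; auto. destruct H1 as [E1 E2]. unfold mpos in P. rewrite E1, E2 in P. lra.
    - assert (INR (MA th a + MA th b) = INR (MB th a + MB th b) * th) by (rewrite !plus_INR; lra).
      apply irr_lin_nat in H1; auto. lia.
    - assert (INR (MA th a + MA th b) = INR (MB th a + MB th b) * th) by (rewrite !plus_INR; lra).
      apply irr_lin_nat in H1; auto. lia.
    - assert (INR (MA th a) + INR (MB th b) * th = INR (MA th b) + INR (MB th a) * th) by lra.
      apply repr_uniq in H1; auto. destruct H1 as [E1 E2]. unfold mpos in P. rewrite E1, E2 in P. lra. }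
  intros th Hi Ht a b E. destruct (Nat.lt_total a b) as [H|[H|H]]; auto; exfalso.
  - apply (Main th Hi Ht a b H E).
  - apply (Main th Hi Ht b a H (eq_sym E)).
Qed.

Lemma lamv_ne1 : forall th, irrational th -> 1 < th < 2 -> forall a, lamv th a <> 1.
Proof.
  intros th Hi Ht a E. pose proof (MB_pos th Hi ltac:(lra) a).
  unfold lamv, Rabs in E. destruct Rcase_abs.
  - assert (INR (MA th a + 1) = INR (MB th a) * th) by (rewrite plus_INR; simpl; lra).
    apply irr_lin_nat in H0; auto. lia.
  - assert (IZR (Z.of_nat (MA th a) - 1) = IZR (Z.of_nat (MB th a)) * th) by (rewrite minus_IZR, <- !INR_IZR_INZ; lra).
    apply irr_lin in H0; auto. lia.
Qed.

Lemma s0_zero : forall th s, 1 < th -> is_increasing_enum th s -> s 0%nat = 0.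
Proof.
  intros th s Ht He. pose proof He as [Hs HS].
  destruct (HS 0) as [H1 _]. destruct H1 as [n0 Hn0]. { exists 0%nat, 0%nat. simpl. ring. }
  destruct (HS (s 0%nat)) as [_ H2]. destruct (H2 (ex_intro _ 0%nat eq_refl)) as [i [j E]].
  assert (0 <= s 0%nat) by (rewrite E; pose proof (pos_INR i); pose proof (pos_INR j); nra).
  destruct n0. lra. pose proof (s_mono th s He 0 (S n0) ltac:(lia)). lra.
Qed.

Lemma delta0 : forall th s, 1 < th -> is_increasing_enum th s -> delta s 0 = 1.
Proof.
  intros th s Ht He.
  replace 1 with (IZR 1 + IZR 0 * th) by (simpl; ring).
  apply (delta_char th s He 0 0 0).
  - rewrite (s0_zero th s Ht He). simpl. ring.
  - split; simpl; lia.
  - simpl. lra.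
  - intros x y [Fx Fy] Hv. simpl in Fx, Fy.
    destruct (Z.eq_dec y 0).
    + subst. assert (x <> 0%Z) by (intro; subst; simpl in Hv; lra).
      assert (1 <= IZR x) by (apply IZR_le; lia). lra.
    + assert (1 <= IZR y) by (apply IZR_le; lia). assert (0 <= IZR x) by (apply IZR_le; lia). nra.
Qed.

Lemma first_occb_iff : forall d j, first_occb d j = true <-> forall j', (j' < j)%nat -> d j' <> d j.
Proof.
  intros d j. unfold first_occb. rewrite forallb_forall. split.
  - intros H j' Hj E. specialize (H j'). rewrite in_seq in H. specialize (H ltac:(lia)).
    destruct Req_dec_T; [discriminate|contradiction].
  - intros H x Hx. rewrite in_seq in Hx. destruct Req_dec_T; auto. exfalso. apply (H x); auto; lia.
Qed.

Lemma filter_none : forall (f : nat -> bool) l, (forall x, In x l -> f x = false) -> filter f l = nil.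
Proof. intros f l; induction l; intros H; simpl; auto. rewrite H by (left; auto). apply IHl. intros; apply H; right; auto. Qed.

Lemma count_first : forall (f : nat -> bool) (K : nat -> nat), (forall m, (K m < K (S m))%nat) ->
  (forall j, f j = true <-> exists m, j = K m) -> K 0%nat = 0%nat ->
  forall N, length (filter f (seq 0 (K N))) = N.
Proof.
  intros f K Hinc Hf H0.
  assert (Mono : forall a b, (a < b)%nat -> (K a < K b)%nat).
  { intros a b H. induction H. apply Hinc. specialize (Hinc m). lia. }
  assert (Mono2 : forall a b, (K a < K b)%nat -> (a < b)%nat).
  { intros a b H. destruct (Nat.lt_ge_cases a b); auto. destruct (Nat.eq_dec a b); [subst; lia|].
    assert (b < a)%nat by lia. specialize (Mono b a H2). lia. }
  induction N. rewrite H0. simpl. auto.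
  pose proof (Hinc N).
  replace (K (S N)) with (K N + (S (K (S N) - K N - 1)))%nat by lia.
  rewrite seq_app, filter_app, length_app, IHN. simpl.
  assert (f (K N) = true) by (apply Hf; exists N; auto). rewrite H1. simpl.
  rewrite filter_none. simpl. lia.
  intros x Hx. rewrite in_seq in Hx. destruct (f x) eqn:Ef; auto. apply Hf in Ef. destruct Ef as [m Em].
  subst x. assert (N < m)%nat by (apply Mono2; lia). assert (m < S N)%nat by (apply Mono2; lia). lia.
Qed.

Lemma label_thm : forall th s, irrational th -> 1 < th < 2 -> is_increasing_enum th s ->
  forall m, lam (delta s) (lamv th m) (S m).
Proof.
  intros th s Hi Ht He.
  assert (HK : forall m, {K | s K = mpos th m}).
  { intro m. apply constructive_indefinite_description. destruct He as [_ HS].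
    destruct (HS (mpos th m)) as [H1 _]. destruct (H1 (pos_in_S th m)) as [n E]. exists n; auto. }
  set (K := fun m => proj1_sig (HK m)).
  assert (HKs : forall m, s (K m) = mpos th m) by (intro m; unfold K; destruct (HK m); auto).
  assert (Dpos : forall m, delta s (K m) = lamv th m) by (intro m; apply delta_at_pos; auto).
  assert (Kinc : forall a b, (a < b)%nat -> (K a < K b)%nat).
  { intros a b H. apply (s_lt_inv th s He). rewrite !HKs. apply pos_incr_lt; auto. }
  assert (Hs0 := s0_zero th s ltac:(lra) He).
  assert (K0 : (0 < K 0)%nat).
  { apply (s_lt_inv th s He). rewrite HKs, Hs0. unfold mpos, MA, MB. simpl. destruct Rlt_dec; lra. }
  assert (NoEarly : forall m k, (k < K m)%nat -> delta s k <> lamv th m).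
  { intros m k Hk E. destruct (Core th s Hi Ht He k) as [E1|[m' [E1 E2]]].
    - apply (lamv_ne1 th Hi Ht m). lra.
    - rewrite E in E1. apply lamv_inj in E1; auto. subst m'. rewrite <- HKs in E2.
      apply (s_le_inv th s He) in E2. lia. }
  set (K' := fun m => match m with O => O | S m' => K m' end).
  assert (FO : forall j, first_occb (delta s) j = true <-> exists m, j = K' m).
  { intro j. rewrite first_occb_iff. split.
    - intros H. destruct j. exists 0%nat; auto.
      destruct (Core th s Hi Ht He (S j)) as [E1|[m' [E1 E2]]].
      + exfalso. apply (H 0%nat). lia. rewrite E1. apply (delta0 th s); auto; lra.
      + rewrite <- HKs in E2. apply (s_le_inv th s He) in E2.
        destruct (Nat.eq_dec (K m') (S j)). exists (S m'); simpl; auto.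
        exfalso. apply (H (K m')). lia. rewrite Dpos. auto.
    - intros [m' Em] j' Hj'. subst j. destruct m'; simpl in Hj'. lia.
      simpl. rewrite Dpos. apply NoEarly; auto. }
  intro m. exists (K m). split; [|split].
  - apply Dpos.
  - intros; apply NoEarly; auto.
  - unfold n_distinct_before. change (K m) with (K' (S m)).
    rewrite (count_first _ K'); auto.
    intros [|m']; simpl. apply K0. apply Kinc. lia.
Qed.

Lemma level_walk : forall th a1 b1 a0 b0 x N tj,
  let al := INR a1 - INR b1 * th in let be := INR a0 - INR b0 * th in
  x * al + be = 0 -> INR tj < x ->
  (0 < al -> st th N = mk a0 b0 a1 b1) -> (al < 0 -> st th N = mk a1 b1 a0 b0) ->
  forall t, (t <= tj)%nat ->
  (0 < al -> st th (N + t) = mk (t * a1 + a0) (t * b1 + b0) a1 b1) /\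
  (al < 0 -> st th (N + t) = mk a1 b1 (t * a1 + a0) (t * b1 + b0)).
Proof.
  intros th a1 b1 a0 b0 x N tj al be Hx Htj H1 H2 t. induction t; intros Ht.
  - rewrite Nat.add_0_r. simpl. split; intros; [rewrite H1|rewrite H2]; auto.
  - destruct IHt as [I1 I2]; [lia|].
    assert (Ht' : INR t + 1 < x) by (apply le_INR in Ht; rewrite S_INR in Ht; lra).
    assert (Key : INR (t * a1 + a0 + a1) - INR (t * b1 + b0 + b1) * th = al * (INR t + 1 - x)).
    { replace (al * (INR t + 1 - x)) with (al * (INR t + 1) - x * al) by ring.
      replace (x * al) with (- be) by lra. unfold al, be. rewrite !plus_INR, !mult_INR. ring. }
    assert (Key2 : INR (a1 + (t * a1 + a0)) - INR (b1 + (t * b1 + b0)) * th = al * (INR t + 1 - x)).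
    { replace (a1 + (t * a1 + a0))%nat with (t * a1 + a0 + a1)%nat by lia.
      replace (b1 + (t * b1 + b0))%nat with (t * b1 + b0 + b1)%nat by lia. exact Key. }
    rewrite Nat.add_succ_r. split; intro Ha.
    + simpl. rewrite (I1 Ha). unfold step. cbn [sp sq sr ss].
      destruct Rlt_dec as [L|L].
      * f_equal; lia.
      * exfalso. apply L. assert (al * (INR t + 1 - x) < 0) by nra. lra.
    + simpl. rewrite (I2 Ha). unfold step. cbn [sp sq sr ss].
      destruct Rlt_dec as [L|L].
      * exfalso. assert (al * (INR t + 1 - x) > 0) by nra. lra.
      * f_equal; lia.
Qed.

Definition al th j := INR (pa th (S j)) - INR (pb th (S j)) * th.
Definition be th j := INR (pa th j) - INR (pb th j) * th.

Definition Lvl th j := al th j <> 0 /\ cf_rem th j * al th j + be th j = 0 /\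
  (0 < al th j -> st th (Tj th j) = mk (pa th j) (pb th j) (pa th (S j)) (pb th (S j))) /\
  (al th j < 0 -> st th (Tj th j) = mk (pa th (S j)) (pb th (S j)) (pa th j) (pb th j)).

Lemma Lvl_all : forall th, irrational th -> 1 < th -> forall j, Lvl th j.
Proof.
  intros th Hi H1 j. induction j.
  - unfold Lvl, al, be, Tj, tl, pa, pb. simpl. repeat split; intros; try lra; auto.
  - destruct IHj as (A0 & A1 & A2 & A3).
    destruct (cft_props th Hi H1 j) as ([C1 C2] & C3 & C4).
    pose proof (level_walk th (pa th (S j)) (pb th (S j)) (pa th j) (pb th j) (cf_rem th j) (Tj th j) (cf_t th j)
      A1 C1 A2 A3 (cf_t th j) (le_n _)) as [W1 W2].
    destruct (pab_SS th j) as [P1 P2].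
    assert (Eal : al th (S j) = al th j * (INR (cf_t th j) - cf_rem th j)).
    { unfold al. rewrite P1, P2, !plus_INR, !mult_INR. unfold al, be in A1. unfold al. nra. }
    assert (Ebe : be th (S j) = al th j) by (unfold be, al; auto).
    assert (Hx : cf_rem th (S j) * (cf_rem th j - INR (cf_t th j)) = 1).
    { rewrite C4. field. lra. }
    unfold Lvl. rewrite Tj_S. repeat split.
    + rewrite Eal. intro E. apply Rmult_integral in E. destruct E; [contradiction|lra].
    + rewrite Eal, Ebe. nra.
    + intro Hp. rewrite Eal in Hp. assert (al th j < 0).
      { destruct (Rlt_dec (al th j) 0); auto. assert (0 < al th j) by (destruct (Rtotal_order (al th j) 0) as [?|[?|?]]; lra). nra. }
      rewrite (W2 H). f_equal; lia.
    + intro Hp. rewrite Eal in Hp. assert (0 < al th j).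
      { destruct (Rtotal_order (al th j) 0) as [?|[?|?]]; try lra. nra. }
      rewrite (W1 H). f_equal; lia.
Qed.

Lemma conv_is_mediant : forall th, irrational th -> 1 < th -> forall j t, (1 <= t <= cf_t th j)%nat ->
  MA th (Tj th j + (t - 1)) = (t * pa th (S j) + pa th j)%nat /\
  MB th (Tj th j + (t - 1)) = (t * pb th (S j) + pb th j)%nat.
Proof.
  intros th Hi H1 j t Ht.
  destruct (Lvl_all th Hi H1 j) as (A0 & A1 & A2 & A3).
  destruct (cft_props th Hi H1 j) as ([C1 C2] & C3 & C4).
  pose proof (level_walk th (pa th (S j)) (pb th (S j)) (pa th j) (pb th j) (cf_rem th j) (Tj th j) (cf_t th j)
      A1 C1 A2 A3 (t - 1) ltac:(lia)) as [W1 W2].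
  unfold MA, MB. destruct (Rtotal_order (al th j) 0) as [L|[L|L]].
  - rewrite (W2 L). cbn [sp sq sr ss]. split; nia.
  - contradiction.
  - rewrite (W1 L). cbn [sp sq sr ss]. split; nia.
Qed.

Theorem mainTheorem13 (theta : R) (s : nat -> R) :
  1 < theta < 2 -> irrational theta -> is_increasing_enum theta s ->
  lam (delta s) (Rabs (INR 1 - INR 0 * theta)) 0%nat /\
  (forall (j t A B c0 : nat) (cs : list nat),
     (1 <= t <= cf_t theta j)%nat ->
     A = (t * pa theta (S j) + pa theta j)%nat ->
     B = (t * pb theta (S j) + pb theta j)%nat ->
     (1 <= c0)%nat -> Forall (fun c => (1 <= c)%nat) cs ->
     cf_val c0 cs = INR A / INR B ->
     lam (delta s) (Rabs (INR A - INR B * theta)) (c0 + list_sum cs)%nat).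
Proof.
  intros Ht Hi He. split.
  - exists 0%nat. split; [|split].
    + rewrite (delta0 theta s) by (auto; lra). simpl. rewrite Rmult_0_l, Rminus_0_r, Rabs_R1. auto.
    + intros; lia.
    + auto.
  - intros j t A B c0 cs Htj HA HB Hc0 Hcs Hv.
    destruct (conv_is_mediant theta Hi ltac:(lra) j t Htj) as [M1 M2].
    set (n := (Tj theta j + (t - 1))%nat) in *.
    assert (HB1 : (1 <= B)%nat) by (rewrite HB, <- M2; apply MB_pos; auto; lra).
    assert (HA1 : (1 <= A)%nat).
    { rewrite HA, <- M1. unfold MA. destruct (st_good theta Hi ltac:(lra) n) as (_&_&_&_&Hr). lia. }
    destruct (conv_expansion theta j t ltac:(lia)) as (d0 & ds & D1 & D2 & D3 & D4).
    { intro k. destruct (cft_props theta Hi ltac:(lra) k) as (_ & X & _). auto. }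
    rewrite cfR_pab in D3 by (apply (lt_INR 0); lia).
    assert (D3' : cf_val d0 ds = INR A / INR B).
    { rewrite D3, HA, HB, !plus_INR, !mult_INR. auto. }
    pose proof (E_cf cs c0 A B Hc0 Hcs HA1 HB1 Hv) as E1.
    pose proof (E_cf ds d0 A B D1 D2 HA1 HB1 D3') as E2.
    replace (c0 + list_sum cs)%nat with (S n) by (unfold n; lia).
    replace (Rabs (INR A - INR B * theta)) with (lamv theta n) by (unfold lamv; rewrite M1, M2, HA, HB; auto).
    apply label_thm; auto.
Qed.
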